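(* Let $C_1,C_2$ be Archimedean $d$-copulas with strict generators $\phi_1,\phi_2$, respectively. If there exists $\varepsilon>0$ such that $\phi_1/\phi_2$ is increasing on $(0,\varepsilon)$, then $\phi_1\circ\phi_2^{-1}:[0,\infty)\to[0,\infty)$ is subadditive near $\infty$.
   Context: A generator is a continuous, strictly decreasing function $\phi:[0,1]\to[0,\infty]$ with $\phi(1)=0$; it is strict if $\lim_{s\searrow0}\phi(s)=\infty$, in which case $\phi$ is a bijection $(0,1]\to[0,\infty)$ with inverse $\phi^{-1}$. A $d$-copula $C$ is Archimedean with strict generator $\phi$ if $C(\boldsymbol u)=\phi^{-1}(\sum_{k=1}^d\phi(u_k))$. A function $f:[0,\infty)\to[0,\infty)$ is subadditive near $\infty$ if there is $M\ge0$ with $f(x+y)\le f(x)+f(y)$ for all $x,y\in[M,\infty)$. *)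

(* Defs.v *)
From HB Require Import structures.
From mathcomp Require Import all_boot all_order all_algebra.
From mathcomp Require Import all_classical all_reals all_analysis.
Set Implicit Arguments. Unset Strict Implicit. Unset Printing Implicit Defensive.
Import Order.TTheory GRing.Theory Num.Theory.
Import numFieldNormedType.Exports.
Local Open Scope classical_set_scope.
Local Open Scope ring_scope.

Section Defs.
Variable R : realType.

(** Strict generator: represented on (0,1] (the value at 0 is +oo, encoded
    by the limit condition); continuous, strictly decreasing, phi 1 = 0,
    phi s -> +oo as s -> 0+. *)
Definition strict_generator (phi : R -> R) : Prop :=
  [/\ {within `]0, 1], continuous phi},
      {in `]0, 1] &, forall s t, s < t -> phi t < phi s},
      phi 1 = 0 &
      phi x @[x --> 0^'+] --> +oo].

Definition gen_inv (phi : R -> R) (x : R) : R :=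
  xget 1 [set s | 0 < s <= 1 /\ phi s = x].

Definition in_unit_cube d (u : 'I_d -> R) : Prop := forall k, 0 <= u k <= 1.

Definition is_copula d (C : ('I_d -> R) -> R) : Prop :=
  [/\ (forall u, in_unit_cube u -> 0 <= C u <= 1),
      (forall u, in_unit_cube u -> (exists k, u k = 0) -> C u = 0),
      (forall u k, in_unit_cube u -> (forall j, j != k -> u j = 1) -> C u = u k) &
      (forall a b : 'I_d -> R, in_unit_cube a -> in_unit_cube b ->
         (forall k, a k <= b k) ->
         0 <= \sum_(S : {set 'I_d})
                (-1) ^+ #|S| * C (fun k => if k \in S then a k else b k))].

(** C is an Archimedean d-copula with strict generator phi:
    C(u) = phi^{-1}(sum_k phi(u_k)), with the convention phi(0) = +oo,
    phi^{-1}(+oo) = 0 (so C(u) = 0 as soon as some u_k = 0). *)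
Definition archimedean_copula d (C : ('I_d -> R) -> R) (phi : R -> R) : Prop :=
  [/\ is_copula C, strict_generator phi &
      forall u, in_unit_cube u ->
        C u = if [forall k, 0 < u k] then gen_inv phi (\sum_k phi (u k)) else 0].

Definition subadditive_near_infty (f : R -> R) : Prop :=
  exists M : R, 0 <= M /\
    forall x y, M <= x -> M <= y -> f (x + y) <= f x + f y.

End Defs.

(* Main.v *)
Require Import Defs.
From HB Require Import structures.
From mathcomp Require Import all_boot all_order all_algebra.
From mathcomp Require Import all_classical all_reals all_analysis.
Import Order.TTheory GRing.Theory Num.Theory.
Import numFieldNormedType.Exports.
Local Open Scope classical_set_scope.
Local Open Scope ring_scope.

Lemma gen_invP (R : realType) (phi : R -> R) (x : R) :
  strict_generator phi -> 0 <= x ->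
  0 < gen_inv phi x <= 1 /\ phi (gen_inv phi x) = x.
Proof.
case=> cphi dphi phi1 lim x0.
apply: (@xgetPex _ 1 [set s | 0 < s <= 1 /\ phi s = x]).
have /cvgryPge/(_ x) H := lim.
have H2 : \forall t \near (0:R)^'+, 0 < t < 1.
  near=> t; apply/andP; split.
    by near: t; exact: nbhs_right_gt.
  by near: t; exact: nbhs_right_lt.
have [a [Ha /andP[a0 a1]]] : exists a, x <= phi a /\ 0 < a < 1.
  exact: (@filter_ex _ _ (at_right_proper_filter (0:R)) _ (filterI H H2)).
have cont : {within `[a, 1], continuous phi}.
  apply: (@continuous_subspaceW R R `[a, 1] `]0, 1] phi _ cphi).
  move=> t /=; rewrite !in_itv /= => /andP[at1 ->].
  by rewrite andbT (lt_le_trans a0 at1).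
have bnd : Num.min (phi a) (phi 1) <= x <= Num.max (phi a) (phi 1).
  by rewrite phi1 ge_min le_max x0 Ha orbT.
have [c] := @IVT R phi a 1 x (ltW a1) cont bnd.
rewrite in_itv /= => /andP[ac c1] pc; exists c; split => //.
by rewrite c1 andbT (lt_le_trans a0 ac).
Unshelve. all: by end_near.
Qed.

Lemma gen_inv_anti (R : realType) (phi : R -> R) (x y : R) :
  strict_generator phi -> 0 <= x -> x <= y ->
  gen_inv phi y <= gen_inv phi x.
Proof.
move=> sg x0 xy.
have [/andP[sx0 sx1] px] := gen_invP _ _ x sg x0.
have [/andP[sy0 sy1] py] := gen_invP _ _ y sg (le_trans x0 xy).
case: sg => _ dphi _ _.
rewrite leNgt; apply/negP => lt.
have := dphi _ _ _ _ lt.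
rewrite !in_itv /= sx0 sx1 sy0 sy1 => /(_ isT isT).
by rewrite px py ltNge xy.
Qed.

Theorem mainTheorem13 (R : realType) (d : nat) (C1 C2 : ('I_d -> R) -> R)
    (phi1 phi2 : R -> R) :
  (2 <= d)%N ->
  archimedean_copula C1 phi1 ->
  archimedean_copula C2 phi2 ->
  (exists eps : R, 0 < eps /\
     forall s t, 0 < s -> s <= t -> t < eps -> t < 1 ->
       phi1 s / phi2 s <= phi1 t / phi2 t) ->
  subadditive_near_infty (fun x => phi1 (gen_inv phi2 x)).
Proof.
move=> _ _ [_ sg _] [eps [eps0 Hinc]].
set t0 := Num.min eps 1 / 2.
have m0 : 0 < Num.min eps 1 by rewrite lt_min eps0 ltr01.
have t00 : 0 < t0 by rewrite divr_gt0.
have t0m : t0 < Num.min eps 1 by rewrite /t0 ltr_pdivrMr // ltr_pMr // ltr1n.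
have t0e : t0 < eps by apply: (lt_le_trans t0m); rewrite ge_min lexx.
have t01 : t0 < 1 by apply: (lt_le_trans t0m); rewrite ge_min lexx orbT.
have sg' := sg; case: sg' => _ dphi phi21 _.
have M0 : 0 < phi2 t0.
  rewrite -phi21; apply: (dphi t0 1) => //; rewrite in_itv /= ?t00 ?(ltW t01) ?ltr01 ?lexx //.


rewrite /subadditive_near_infty; exists (phi2 t0); split; first exact: ltW.
have sM : gen_inv phi2 (phi2 t0) <= t0.
  have [/andP[s0 s1] ps] := gen_invP _ _ (phi2 t0) sg (ltW M0).
  rewrite leNgt; apply/negP => lt.
  have := dphi _ _ _ _ lt.
  rewrite !in_itv /= s0 s1 t00 (ltW t01) => /(_ isT isT).
  by rewrite ps ltxx.
have key : forall x z, phi2 t0 <= x -> x <= z ->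
    phi1 (gen_inv phi2 z) / z <= phi1 (gen_inv phi2 x) / x.
  move=> x z Mx xz.
  have x0 : 0 <= x := le_trans (ltW M0) Mx.
  have z0 : 0 <= z := le_trans x0 xz.
  have [/andP[sx0 sx1] px] := gen_invP _ _ x sg x0.
  have [/andP[sz0 sz1] pz] := gen_invP _ _ z sg z0.
  have sxM : gen_inv phi2 x <= t0.
    exact: le_trans (gen_inv_anti _ _ _ _ sg (ltW M0) Mx) sM.
  have := Hinc _ _ sz0 (gen_inv_anti _ _ _ _ sg x0 xz) (le_lt_trans sxM t0e)
    (le_lt_trans sxM t01).
  by rewrite px pz.
move=> x y Mx My.
have x0 : 0 < x := lt_le_trans M0 Mx.
have y0 : 0 < y := lt_le_trans M0 My.
have hxy : x <= x + y by rewrite lerDl ltW.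
have hyx : y <= x + y by rewrite lerDr ltW.
have kx := key x (x + y) Mx hxy.
have ky := key y (x + y) My hyx.
set F := phi1 (gen_inv phi2 (x + y)) in kx ky *.
set Fx := phi1 (gen_inv phi2 x) in kx *.
set Fy := phi1 (gen_inv phi2 y) in ky *.
have xy0 : 0 < x + y by rewrite addr_gt0.
have -> : F = x * (F / (x + y)) + y * (F / (x + y)).
  by rewrite -mulrDl mulrC mulfVK // gt_eqF.
have -> : Fx = x * (Fx / x) by rewrite mulrC mulfVK // gt_eqF.
have -> : Fy = y * (Fy / y) by rewrite mulrC mulfVK // gt_eqF.
by apply: lerD; apply: ler_wpM2l => //; apply: ltW.
Qed.
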